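(* Let $C$ be a self-dual $[20,10,9]$ code over $\mathrm{GF}(7)$ with $A_7(C)\cong D_{20}^+$. Then there exists a skew-Hadamard matrix $H$ of order $20$ such that $C$ is generated over $\mathrm{GF}(7)$ by the row vectors of $H+2I$ (reduced modulo $7$).
   Context: An $[n,k,d]$ code over $\mathrm{GF}(p)$ is a $k$-dimensional subspace of $\mathrm{GF}(p)^n$ with minimum nonzero Hamming weight $d$; it is self-dual if $C=C^\perp$ under the standard inner product. Construction A: let $\varepsilon_1,\dots,\varepsilon_{20}$ be an orthogonal basis of $\mathbb{R}^{20}$ with $(\varepsilon_i,\varepsilon_j)=7\delta_{i,j}$, and $A_7(C)=\{\frac17\sum_{i=1}^{20} x_i\varepsilon_i\mid x\in\mathbb{Z}^{20},\ x\bmod 7\in C\}$. Lattices $L,L'$ are isomorphic if $L'=\{xA\mid x\in L\}$ for an orthogonal matrix $A$. With $e_1,\dots,e_{20}$ the standard basis of $\mathbb{R}^{20}$: $D_{20}=\{\sum\alpha_ie_i\mid\alpha\in\mathbb{Z}^{20},\ \sum\alpha_i\equiv0\pmod 2\}$, $D_{20}^+=\langle D_{20},\frac12\mathbf 1\rangle$ with $\mathbf 1$ the all-one vector. A Hadamard matrix of order $n$ is an $n\times n$ $(1,-1)$-matrix $H$ with $HH^\top=nI$; it is skew-Hadamard if moreover $H+H^\top=2I$. *)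

(* Defs.v *)
From HB Require Import structures.
From mathcomp Require Import all_boot all_order all_algebra.
Set Implicit Arguments. Unset Strict Implicit. Unset Printing Implicit Defensive.
Import Order.TTheory GRing.Theory Num.Theory.
Local Open Scope ring_scope.

(* A linear code of length n over a field F is represented by a matrix whose
   row space (mxalgebra) is the code; codewords are row vectors v with
   (v <= C)%MS. *)

Definition hweight (F : fieldType) n (v : 'rV[F]_n) : nat :=
  #|[set i : 'I_n | v 0 i != 0]|.

(* Dual code w.r.t. the standard inner product: all u with u . c = 0 for every
   row c of C, i.e. u *m C^T = 0. *)
Definition dual_code (F : fieldType) n (C : 'M[F]_n) : 'M[F]_n := kermx C^T.

Definition self_dual (F : fieldType) n (C : 'M[F]_n) : bool :=
  (C == dual_code C)%MS.

Definition min_weight (F : fieldType) n (C : 'M[F]_n) (d : nat) : Prop :=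
  (exists2 v : 'rV[F]_n, (v <= C)%MS /\ v != 0 & hweight v = d) /\
  (forall v : 'rV[F]_n, (v <= C)%MS -> v != 0 -> (d <= hweight v)%N).

Definition is_code (F : fieldType) n (C : 'M[F]_n) (k d : nat) : Prop :=
  \rank C = k /\ min_weight C d.

Definition intmx (R : pzRingType) m n (x : 'M[int]_(m, n)) : 'M[R]_(m, n) :=
  map_mx (fun z : int => z%:~R) x.

(* Construction A: given vectors eps_1..eps_20 (rows of eps) in R^20,
   A_7(C) = { (1/7) sum x_i eps_i | x in Z^20, x mod 7 in C }. *)
Definition inA7 (R : rcfType) (eps : 'M[R]_20) (C : 'M['F_7]_20)
    (v : 'rV[R]_20) : Prop :=
  exists x : 'rV[int]_20,
    (intmx 'F_7 x <= C)%MS /\ v = 7%:R^-1 *: (intmx R x *m eps).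

Definition inD20 (R : rcfType) (v : 'rV[R]_20) : Prop :=
  exists a : 'rV[int]_20, (2 %| \sum_i a 0 i)%Z /\ v = intmx R a.

Definition inD20plus (R : rcfType) (v : 'rV[R]_20) : Prop :=
  exists d : 'rV[R]_20, exists k : int,
    inD20 d /\ v = d + (k%:~R / 2%:R) *: const_mx 1.

Definition lattice_iso (R : rcfType) (L L' : 'rV[R]_20 -> Prop) : Prop :=
  exists A : 'M[R]_20, A *m A^T = 1%:M /\
    (forall v, L' v <-> exists2 x, L x & v = x *m A).

Definition skew_hadamard n (H : 'M[int]_n) : Prop :=
  (forall i j, H i j = 1 \/ H i j = -1) /\
  H *m H^T = n%:R%:M /\ H + H^T = 2%:M.

(* Main.v *)
Require Import Defs.
From HB Require Import structures.
From mathcomp Require Import all_boot all_order all_algebra.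
From mathcomp Require Import zify ring lra.
Import Order.TTheory GRing.Theory Num.Theory.
Local Open Scope ring_scope.

Lemma intmx_inj (R : numDomainType) m n (x y : 'M[int]_(m,n)) :
  intmx R x = intmx R y -> x = y.
Proof.
move=> E; apply/matrixP=> i j; move/matrixP: E => /(_ i j).
by rewrite !mxE => /intr_inj.
Qed.

Lemma intmxM (R : comPzRingType) m n p (x : 'M[int]_(m,n)) (y : 'M[int]_(n,p)) :
  intmx R (x *m y) = intmx R x *m intmx R y.
Proof. by rewrite /intmx map_mxM. Qed.

Lemma intmxT (R : pzRingType) m n (x : 'M[int]_(m,n)) :
  intmx R x^T = (intmx R x)^T.
Proof. by rewrite /intmx map_trmx. Qed.

Lemma odd_sq (c : int) : (2*c+1)^+2 = 1 \/ 9 <= (2*c+1)^+2.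
Proof.
have [h|h] : (c = 0 \/ c = -1) \/ (1 <= c \/ c <= -2) by lia.
  by left; case: h => ->; rewrite ?mulr0 ?add0r ?expr1n //.
right; rewrite expr2; nia.
Qed.

Lemma one_big (v : 'I_20 -> int) :
  (forall j, exists c, v j = 2*c+1) -> \sum_j v j ^+ 2 = 28 ->
  exists j0, v j0 ^+ 2 = 9 /\ forall j, j != j0 -> v j ^+ 2 = 1.
Proof.
move=> Hodd Hs.
have Hge j : v j ^+ 2 = 1 \/ 9 <= v j ^+ 2 by case: (Hodd j) => c ->; apply: odd_sq.
have Hs' : \sum_j (v j ^+ 2 - 1) = 8.
  by rewrite sumrB Hs sumr_const card_ord.
case: (pickP (fun j => v j ^+ 2 != 1)) => [j0 /eqP Hj0|Hall]; last first.
  move: Hs'; rewrite big1 // => j _; move/eqP: (negbFE (Hall j)) => ->.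
  by rewrite subrr.
exists j0.
have Hnn j : 0 <= v j ^+ 2 - 1 by case: (Hge j) => h; rewrite ?h ?subrr //; lia.
have H9 : 9 <= v j0 ^+ 2 by case: (Hge j0).
move: Hs'; rewrite (bigD1 j0) //= => Hs'.
have Hrest : \sum_(j | j != j0) (v j ^+ 2 - 1) = 0.
  apply/eqP; rewrite eq_le sumr_ge0 ?andbT; last by move=> j _; apply: Hnn.
  lra.
have := psumr_eq0P (fun j _ => Hnn j) Hrest => Hz.
split; last by move=> j /Hz /eqP; rewrite subr_eq0 => /eqP.
lra.
Qed.
Lemma F2_sq (x : 'F_2) : x ^+ 2 = x.
Proof. by rewrite expr2; case: x => [[|[|]]] //= ?; apply/eqP. Qed.

Lemma k_odd (a : 'rV[int]_20) (k : int) :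
  (2 %| \sum_i a 0 i)%Z -> \sum_j (2 * a 0 j + k) ^+ 2 = 28 ->
  exists m, k = 2 * m + 1.
Proof.
move=> /dvdzP [t Ht] Hs.
have E : \sum_j (2 * a 0 j + k) ^+ 2 =
   4 * \sum_j a 0 j ^+ 2 + 4 * k * \sum_j a 0 j + 20 * k ^+ 2.
  rewrite (eq_bigr (fun j => 4 * a 0 j ^+ 2 + 4 * k * a 0 j + k ^+ 2)); last first.
    by move=> j _; ring.
  rewrite !big_split /= sumr_const card_ord -!mulr_sumr; ring.
rewrite E Ht in Hs.
have Hs2 : \sum_j a 0 j ^+ 2 + 2 * k * t + 5 * k ^+ 2 = 7 by lia.
have Hk : (k%:~R : 'F_2) = 1.
  have L : ((\sum_j a 0 j ^+ 2 + 2 * k * t + 5 * k ^+ 2)%:~R : 'F_2) = k%:~R.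
    rewrite rmorphD rmorphD rmorph_sum /=.
    rewrite (eq_bigr (fun j => ((a 0 j)%:~R : 'F_2))); last by move=> j _; rewrite expr2 rmorphM /= -expr2 F2_sq.
    rewrite -rmorph_sum /= Ht !rmorphM /= -expr2 F2_sq.
    have ->: (2%:~R : 'F_2) = 0 by apply/eqP.
    have ->: (5%:~R : 'F_2) = 1 by apply/eqP.
    ring.
  by rewrite -L Hs2; apply/eqP.
exists (k %/ 2)%Z.
have H1 := divz_eq k 2.
have H2 : (0 <= k %% 2)%Z by apply: modz_ge0.
have H3 : (k %% 2 < 2)%Z by apply: ltz_pmod.
have [H0|H0] : (k %% 2 = 0 \/ k %% 2 = 1)%Z by lia.
  move: Hk; rewrite H1 H0 addr0 rmorphM /=.
  have ->: (2%:~R : 'F_2) = 0 by apply/eqP.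
  by rewrite mulr0 => /eqP.
lia.
Qed.
Lemma pm1_case (a b e : int) : (a = 1 \/ a = -1) -> (b = 1 \/ b = -1) -> (e = 1 \/ e = -1) ->
  2 * (((a + e * b)%:~R : 'F_7) != 0 : nat)%:Z - 1 <= e * (a * b).
Proof.
by case=> ->; case=> ->; case=> ->; rewrite /=;
  (have ->: ((1 + 1 * 1)%:~R : 'F_7) != 0 by []) || 
  (have ->: ((1 + 1 * 1)%:~R : 'F_7) != 0 by []) || idtac.
Qed.

Lemma card_sum (S : {set 'I_20}) : (#|S|%:Z) = \sum_k ((k \in S) : nat)%:Z.
Proof.
rewrite -sum1_card big_mkcond /= -natz natr_sum; apply: eq_bigr => k _.
by case: (k \in S).
Qed.

Lemma count8 (N : 'M[int]_20) (i j : 'I_20) (e : int) : i != j -> (e = 1 \/ e = -1) ->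
  N i i = 3 -> N j j = 3 -> N i j = e -> N j i = e ->
  (forall a b, a != b -> N a b = 1 \/ N a b = -1) -> \sum_k N i k * N j k = 0 ->
  (hweight (intmx 'F_7 (row i N + e *: row j N)) <= 8)%N.
Proof.
move=> Hij He Hii Hjj Hije Hjie Hpm Hs.
rewrite /hweight.
set S := [set _ | _].
have Hk : forall k, 2 * ((k \in S) : nat)%:Z - 1 + 2 * ((k == i) : nat)%:Z + 2 * ((k == j) : nat)%:Z
   <= e * (N i k * N j k).
  move=> k.
  have Hb : forall k, (0 <= ((k \in S) : nat)%:Z <= 1) by move=> k'; case: (k' \in S).
  have He2 : e * e = 1 by case: He => ->.
  case: (eqVneq k i) => [->|Hki].
    have := Hb i; rewrite (negbTE Hij) Hii Hjie /= => Hbi.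
    have ->: e * (3 * e) = 3 * (e * e) by ring.
    rewrite He2; lra.
  case: (eqVneq k j) => [->|Hkj].
    have := Hb j; rewrite Hjj Hije /= => Hbi.
    have ->: e * (e * 3) = 3 * (e * e) by ring.
    rewrite He2; lra.
  rewrite /= addr0 addr0 inE !mxE.
  by apply: pm1_case => //; apply: Hpm; rewrite eq_sym.
have := ler_sum (index_enum _) (P := xpredT) (fun k _ => Hk k).
rewrite -mulr_sumr Hs mulr0 !big_split /= -!mulr_sumr -card_sum.
rewrite sumr_const card_ord.
rewrite (bigD1 i) //= eqxx big1 ?addr0; last by move=> k /negbTE ->.
rewrite (bigD1 j) //= eqxx big1 ?addr0; last by move=> k /negbTE ->.
have ->: (-1 *+ 20 : int) = -20 by [].
rewrite /nat_of_bool /= => H.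
have : (#|S|%:Z <= 8) by move: H; rewrite !mulr1; lra.
by rewrite lez_nat.
Qed.

Lemma intmxZ (R : pzRingType) m n (a : int) (x : 'M[int]_(m,n)) :
  intmx R (a *: x) = a%:~R *: intmx R x.
Proof. by apply/matrixP => i j; rewrite !mxE rmorphM. Qed.

Lemma intmxD (R : pzRingType) m n (x y : 'M[int]_(m,n)) :
  intmx R (x + y) = intmx R x + intmx R y.
Proof. by apply/matrixP => i j; rewrite !mxE rmorphD. Qed.

Lemma aux_sum (x y : int) (b : bool) : x + y = 6 *+ b -> x - 2 *+ b + (y - 2 *+ b) = 2 *+ b.
Proof. by case: b; rewrite ?mulr1n ?mulr0n => H; lra. Qed.

Lemma aux_hh (x y : int) (b : bool) : x + y = 6 *+ b ->
  28 *+ b - 2 * x - (2 * y - 2 * (2 *+ b)) = 20 *+ b.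
Proof. by case: b; rewrite ?mulr1n ?mulr0n => H; lra. Qed.

Theorem proposition1 (R : rcfType) (eps : 'M[R]_20) (C : 'M['F_7]_20) :
  eps *m eps^T = 7%:R%:M ->
  self_dual C ->
  is_code C 10 9 ->
  lattice_iso (@inD20plus R) (inA7 eps C) ->
  exists H : 'M[int]_20,
    skew_hadamard H /\ (C == intmx 'F_7 (H + 2%:M))%MS.
Proof.
move=> Heps Hsd [HrkC [_ Hmin]] [A [HA Hiso]].
have HAT : A^T *m A = 1%:M by apply: mulmx1C.
have Hrow : forall i : 'I_20, exists ak : 'rV[int]_20 * int,
   (2 %| \sum_j ak.1 0 j)%Z /\
   row i eps = (intmx R ak.1 + ((ak.2)%:~R / 2%:R) *: const_mx 1) *m A.
  move=> i.
  have : inA7 eps C (row i eps).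
    exists (7 *: delta_mx 0 i); split.
      have -> : intmx 'F_7 (7 *: delta_mx 0 i : 'rV[int]_20) = 0.
        apply/matrixP => a b; rewrite !mxE rmorphM /=.
        have ->: (7%:~R : 'F_7) = 0 by apply/eqP.
        by rewrite mul0r.
      by rewrite sub0mx.
    have -> : intmx R (7 *: delta_mx 0 i : 'rV[int]_20) = 7%:R *: delta_mx 0 i.
      by apply/matrixP => a b; rewrite !mxE rmorphM /= !rmorph_nat.
    by rewrite rowE -scalemxAl scalerA mulVf ?scale1r // pnatr_eq0.
  case/Hiso => w [d [k [[a [Ha ->]] ->]]] Hw.
  by exists (a, k).
have [f Hf] := @fin_all_exists _ (fun _ => ('rV[int]_20 * int)%type) _ Hrow.
pose U : 'M[int]_20 := \matrix_(i, j) (2 * (f i).1 0 j + (f i).2).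
pose W : 'M[R]_20 := \matrix_(i, j) (((f i).1 0 j)%:~R + ((f i).2)%:~R / 2%:R).
have HepsW : eps = W *m A.
  apply/row_matrixP => i; rewrite row_mul (Hf i).2; congr (_ *m _).
  by apply/rowP => j; rewrite !mxE mulr1.
have HUW : intmx R U = 2%:R *: W.
  apply/matrixP => i j; rewrite !mxE rmorphD rmorphM /=.
  have -> : (2%:~R : R) = 2 by [].
  by field.
have HWW : W *m W^T = 7%:R%:M.
  by rewrite -Heps HepsW trmx_mul mulmxA -(mulmxA W) HA mulmx1.
have HUU : U *m U^T = 28%:M.
  apply: (@intmx_inj R); rewrite intmxM intmxT HUW linearZ /= -scalemxAl -scalemxAr.
  rewrite HWW scalerA /intmx map_scalar_mx /=.
  rewrite scale_scalar_mx; congr (_%:M).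
  have -> : (28%:~R : R) = 28%:R by [].
  by rewrite -!natrM.
have HUtU : U^T *m U = 28%:M.
  apply: (@intmx_inj R); rewrite intmxM intmxT.
  set X := intmx R U.
  have HX : X *m X^T = 28%:R%:M.
    by rewrite -intmxT -intmxM HUU /intmx map_scalar_mx.
  have HX2 : X *m ((28%:R)^-1 *: X^T) = 1%:M.
    by rewrite -scalemxAr HX scale_scalar_mx mulVf // pnatr_eq0.
  have := mulmx1C HX2; rewrite -scalemxAl => /(congr1 (fun M => 28%:R *: M)).
  rewrite scalerA mulfV ?pnatr_eq0 // scale1r => ->.
  by rewrite /intmx map_scalar_mx scale_scalar_mx mulr1.
have HUe : forall i j, U i j = 2 * (f i).1 0 j + (f i).2 by move=> i j; rewrite mxE.
clearbody U W.
have Hrn i : \sum_j U i j ^+ 2 = 28.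
  move/matrixP: HUU => /(_ i i); rewrite !mxE eqxx mulr1n => <-.
  by apply: eq_bigr => j _; rewrite !mxE expr2.
have Hcn j : \sum_i U i j ^+ 2 = 28.
  move/matrixP: HUtU => /(_ j j); rewrite !mxE eqxx mulr1n => <-.
  by apply: eq_bigr => i _; rewrite !mxE expr2.
have Hodd i j : exists c, U i j = 2 * c + 1.
  have [m Hm] : exists m, (f i).2 = 2 * m + 1.
    apply: k_odd (Hf i).1 _.
    by rewrite -(Hrn i); apply: eq_bigr => j' _; rewrite HUe.
  by exists ((f i).1 0 j + m); rewrite HUe Hm; ring.
have [p Hp] := @fin_all_exists _ (fun _ => 'I_20) _
   (fun i => one_big (fun j => U i j) (Hodd i) (Hrn i)).
have [q Hq] := @fin_all_exists _ (fun _ => 'I_20) _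
   (fun j => one_big (fun i => U i j) (fun i => Hodd i j) (Hcn j)).
have Hqp i : q (p i) = i.
  case: (eqVneq i (q (p i))) => [//|/(Hq (p i)).2].
  by rewrite (Hp i).1.
have Hpq j : p (q j) = j.
  case: (eqVneq j (p (q j))) => [//|/(Hp (q j)).2].
  by rewrite (Hq j).1.
have Hsq9 : forall x : int, x ^+ 2 = 9 -> x = 3 \/ x = -3.
  move=> x Hx; have : (x - 3) * (x + 3) == 0.
    have -> : (x - 3) * (x + 3) = x ^+ 2 - 9 by ring.
    by rewrite Hx subrr.
  rewrite mulf_eq0 subr_eq0 addr_eq0 => /orP [] /eqP; [left|right].
  done. done.
have Hsq1 : forall x : int, x ^+ 2 = 1 -> x = 1 \/ x = -1.
  by move=> x /eqP; rewrite sqrf_eq1 => /orP [] /eqP; [left|right].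
pose s i : int := if U i (p i) == 3 then 1 else -1.
have Hs2 i : s i * s i = 1 by rewrite /s; case: ifP.
pose N : 'M[int]_20 := \matrix_(i, j) (s i * U j (p i)).
have HNe : forall i j, N i j = s i * U j (p i) by move=> i j; rewrite mxE.
clearbody N.
have HNd i : N i i = 3.
  rewrite HNe /s; case: (Hsq9 _ (Hp i).1) => ->; by [].
have HNo i j : i != j -> N i j = 1 \/ N i j = -1.
  move=> Hij; have : j != q (p i) by rewrite Hqp eq_sym.
  move/(Hq (p i)).2/Hsq1; rewrite HNe /s.
  by case: ifP => _ [] ->; auto.
have HUtUe : forall a b, \sum_k U k a * U k b = 28 *+ (a == b).
  move=> a b; move/matrixP: HUtU => /(_ a b); rewrite !mxE => <-.
  by apply: eq_bigr => k _; rewrite mxE.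
have HNN : N *m N^T = 28%:M.
  apply/matrixP => i j; rewrite !mxE.
  have -> : \sum_k N i k * N^T k j = s i * s j * \sum_k U k (p i) * U k (p j).
    rewrite mulr_sumr; apply: eq_bigr => k _; rewrite mxE !HNe; ring.
  rewrite HUtUe; case: (eqVneq i j) => [->|Hij].
    by rewrite eqxx Hs2 mul1r.
  have -> : (p i == p j) = false.
    by apply/negbTE; apply: contra Hij => /eqP E; rewrite -(Hqp i) E Hqp.
  by rewrite mulr0n mulr0.
have HNU : intmx 'F_7 (N *m U) = 0.
  apply/matrixP => i k; rewrite !mxE.
  have -> : \sum_l N i l * U l k = s i * \sum_l U l (p i) * U l k.
    rewrite mulr_sumr; apply: eq_bigr => l _; rewrite HNe; ring.
  rewrite HUtUe; case: (p i == k); rewrite ?mulr0n ?mulr1n ?mulr0 ?rmorph0 //.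
  rewrite rmorphM /=; have -> : (28%:~R : 'F_7) = 0 by apply/eqP.
  by rewrite mulr0.
have Hlift : forall c : 'rV['F_7]_20, (c <= C)%MS -> (c <= intmx 'F_7 U^T)%MS.
  move=> c Hc.
  pose x : 'rV[int]_20 := \row_j ((c 0 j : nat)%:Z).
  have Hx : intmx 'F_7 x = c.
    apply/rowP => j; rewrite !mxE; change (((c 0 j : nat))%:R = c 0 j); exact: natr_Zp.
  have : inA7 eps C (7%:R^-1 *: (intmx R x *m eps)) by exists x; rewrite Hx.
  case/Hiso => y [d [k' [[a' [Ha' ->]] ->]]] Hy.
  pose z : 'rV[int]_20 := \row_j (2 * a' 0 j + k').
  set Y := (intmx R a' + _) in Hy.
  have Hz : intmx R z = 2%:R *: Y.
    apply/rowP => j; rewrite !mxE rmorphD rmorphM /= mulr1.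
    have -> : (2%:~R : R) = 2 by [].
    by field.
  have E1 : intmx R x *m W = 7%:R *: Y.
    move: Hy; rewrite HepsW mulmxA => /(congr1 (fun M => 7%:R *: (M *m A^T))).
    by rewrite -scalemxAl scalerA mulfV ?pnatr_eq0 // scale1r -!mulmxA HA !mulmx1.
  have E3 : intmx R x *m intmx R U = 7%:R *: intmx R z.
    by rewrite HUW -scalemxAr E1 Hz !scalerA mulrC.
  have E4 : intmx R U *m (intmx R U)^T = 28%:R%:M.
    by rewrite -intmxT -intmxM HUU /intmx map_scalar_mx.
  have E2 : intmx R (4 *: x) = intmx R (z *m U^T).
    have : 28%:R *: intmx R x = 7%:R *: (intmx R z *m (intmx R U)^T).
      by rewrite -mul_mx_scalar -E4 mulmxA E3 scalemxAl.
    move/(congr1 (fun M => (7%:R)^-1 *: M)); rewrite !scalerA mulVf ?pnatr_eq0 // scale1r.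
    rewrite intmxZ intmxM intmxT => <-; congr (_ *: _).
    have -> : (28%:R : R) = 7%:R * 4%:R by rewrite -natrM.
    by rewrite mulrA mulVf ?pnatr_eq0 // mul1r.
  have E5 := @intmx_inj R _ _ _ _ E2.
  have E6 : 4%:R *: c = intmx 'F_7 z *m intmx 'F_7 U^T.
    by rewrite -Hx -intmxM -E5 intmxZ.
  have -> : c = (2%:R *: intmx 'F_7 z) *m intmx 'F_7 U^T.
    rewrite -scalemxAl -E6 scalerA.
    have -> : (2%:R * 4%:R : 'F_7) = 1 by apply/eqP.
    by rewrite scale1r.
  exact: submxMl.
have HCU : (C <= intmx 'F_7 U^T)%MS.
  by apply/row_subP => r; apply: Hlift; exact: row_sub.
have HUN : (intmx 'F_7 U^T <= intmx 'F_7 N)%MS.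
  apply/row_subP => j.
  have -> : row j (intmx 'F_7 U^T) = ((s (q j))%:~R : 'F_7) *: row (q j) (intmx 'F_7 N).
    by apply/rowP => l; rewrite !mxE HNe Hpq -rmorphM mulrA Hs2 mul1r.
  by apply: scalemx_sub; apply: row_sub.
have HNC : (intmx 'F_7 N <= C)%MS.
  move: Hsd; rewrite /self_dual => /andP [_ HD].
  apply: submx_trans HD; rewrite /dual_code sub_kermx.
  have [X ->] := submxP HCU.
  by rewrite intmxT trmx_mul trmxK mulmxA -intmxM HNU mul0mx.
have Hrowi : forall i, intmx 'F_7 (row i N) = row i (intmx 'F_7 N).
  by move=> i; apply/rowP => l; rewrite !mxE.
have Hskew : forall i j, i != j -> N i j + N j i = 0.
  move=> i j Hij.
  have He : N i j = N j i -> False.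
    move=> E.
    have Hs : \sum_k N i k * N j k = 0.
      move/matrixP: HNN => /(_ i j); rewrite !mxE (negbTE Hij) mulr0n => H0.
      by rewrite -[RHS]H0; apply: eq_bigr => k _; rewrite mxE.
    have Hw := @count8 N i j (N i j) Hij (HNo i j Hij) (HNd i) (HNd j) erefl (esym E) HNo Hs.
    have Hc : (intmx 'F_7 (row i N + N i j *: row j N) <= C)%MS.
      rewrite intmxD intmxZ !Hrowi; apply: addmx_sub.
        exact: submx_trans (row_sub _ _) HNC.
      by apply: scalemx_sub; exact: submx_trans (row_sub _ _) HNC.
    have Hnz : intmx 'F_7 (row i N + N i j *: row j N) != 0.
      apply/eqP => /rowP /(_ i); rewrite !mxE HNd -E.
      by case: (HNo i j Hij) => ->; move/eqP.
    have := Hmin _ Hc Hnz.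
    by rewrite ltnNge Hw.
  have Hji : j != i by rewrite eq_sym.
  case: (HNo i j Hij) => h1; case: (HNo j i Hji) => h2; rewrite h1 h2 //;
    exfalso; apply: He; rewrite h1 h2.
all: try by [].
have Hsume : forall a b, N a b + N b a = 6 *+ (a == b).
  move=> a b; case: (eqVneq a b) => [->|Hab]; first by rewrite HNd.
  by rewrite Hskew.
exists (N - 2%:M); split; last first.
  rewrite subrK; apply/andP; split; [exact: submx_trans HCU HUN | exact: HNC].
split; [|split].
- move=> i j; rewrite !mxE; case: (eqVneq i j) => [->|Hij].
    by rewrite HNd; left.
  by rewrite mulr0n subr0; apply: HNo.
- rewrite linearB /= tr_scalar_mx mulmxBl !mulmxBr HNN mul_mx_scalar !mul_scalar_mx.
  apply/matrixP => a b; rewrite !mxE.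
  exact: aux_hh.
- apply/matrixP => a b; rewrite !mxE.
  rewrite (eq_sym b a); exact: aux_sum.
Qed.
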